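(* Let $A,A'\in\mathbb{C}^{n\times n}$ with $\|A\|_F=\|A'\|_F=1$, $\lambda,\lambda'\in\mathbb{C}$ and $v\in\mathbb{C}^n$ nonzero. If $\mu(A,\lambda,v)\big(\|A'-A\|_F+|\lambda'-\lambda|\big)\le\varepsilon<1$, then $(1-\varepsilon)\mu(A,\lambda,v)\le\mu(A',\lambda',v)\le\frac{1}{1-\varepsilon}\mu(A,\lambda,v)$.
   Context: $\|\cdot\|_F$ is the Frobenius norm. For $v\ne0$, $T_v=v^\perp\subset\mathbb{C}^n$, $P_{v^\perp}$ the orthogonal projection onto $T_v$, $A_{\lambda,v}=P_{v^\perp}(A-\lambda\mathrm{Id})|_{T_v}$, and $\mu(A,\lambda,v)=\|A\|_F\|A_{\lambda,v}^{-1}\|$ (operator norm; $\infty$ if not invertible). No eigen-relation between $A,\lambda,v$ is assumed. *)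

(* Defs.v *)
From HB Require Import structures.
From mathcomp Require Import all_boot all_order all_algebra.
From mathcomp Require Import complex.
From mathcomp Require Import boolp classical_sets reals constructive_ereal ereal.
Set Implicit Arguments.
Unset Strict Implicit.
Unset Printing Implicit Defensive.
Import Order.TTheory GRing.Theory Num.Theory.
Local Open Scope ring_scope.
Local Open Scope classical_set_scope.

Section Defs.
Variables (R : realType) (n : nat).
Local Notation C := R[i].

Definition cmod (z : C) : R := Num.sqrt (complex.Re z ^+ 2 + complex.Im z ^+ 2).

Definition vnorm (w : 'cV[C]_n) : R := Num.sqrt (\sum_(i < n) cmod (w i 0) ^+ 2).

Definition frob (A : 'M[C]_n) : R :=
  Num.sqrt (\sum_(i < n) \sum_(j < n) cmod (A i j) ^+ 2).

Definition cdot (v w : 'cV[C]_n) : C := \sum_(i < n) conjc (v i 0) * w i 0.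

Definition Tv (v : 'cV[C]_n) : set 'cV[C]_n := [set w | cdot v w = 0].

Definition Pperp (v w : 'cV[C]_n) : 'cV[C]_n := w - (cdot v w / cdot v v) *: v.

(* A_{lambda,v} = P_{v^perp} (A - lambda Id), to be considered on T_v *)
Definition Alv (A : 'M[C]_n) (l : C) (v w : 'cV[C]_n) : 'cV[C]_n :=
  Pperp v ((A - l%:M) *m w).

Definition is_inv_Alv (A : 'M[C]_n) (l : C) (v : 'cV[C]_n)
    (B : 'cV[C]_n -> 'cV[C]_n) : Prop :=
  (forall y, Tv v y -> Tv v (B y) /\ Alv A l v (B y) = y) /\
  (forall w, Tv v w -> B (Alv A l v w) = w).

Definition opnorm_Tv (v : 'cV[C]_n) (B : 'cV[C]_n -> 'cV[C]_n) : R :=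
  sup [set vnorm (B y) | y in [set y | Tv v y /\ vnorm y <= 1]].

(* mu(A, lambda, v) = ||A||_F ||A_{lambda,v}^{-1}||, +oo if A_{lambda,v} is
   not invertible on T_v (the inverse is unique on T_v, so the set below is
   a singleton when it is nonempty; ereal_inf set0 = +oo). *)
Definition mu (A : 'M[C]_n) (l : C) (v : 'cV[C]_n) : \bar R :=
  ereal_inf [set ((frob A * opnorm_Tv v B)%:E)%E
            | B in [set B | is_inv_Alv A l v B]].

End Defs.

(* Main.v *)
Require Import Defs.
From HB Require Import structures.
From mathcomp Require Import all_boot all_order all_algebra.
From mathcomp Require Import complex.
From mathcomp Require Import boolp classical_sets reals constructive_ereal ereal.
From mathcomp Require Import ring lra.
Import Order.TTheory GRing.Theory Num.Theory.
Local Open Scope ring_scope.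
Local Open Scope complex_scope.

Section S.
Variable R : realType.
Local Notation C := R[i].
Implicit Types z a b : C.

Lemma cmodE z : (cmod z)%:C = `|z|.
Proof. by rewrite normc_def. Qed.
Lemma cmod_ge0 z : 0 <= cmod z.
Proof. exact: sqrtr_ge0. Qed.
Lemma cmodD a b : cmod (a + b) <= cmod a + cmod b.
Proof. by rewrite -lecR rmorphD /= !cmodE ler_normD. Qed.
Lemma cmodM a b : cmod (a * b) = cmod a * cmod b.
Proof. by apply: complexI; rewrite rmorphM /= !cmodE normrM. Qed.
Lemma cmodN a : cmod (- a) = cmod a.
Proof. by apply: complexI; rewrite !cmodE normrN. Qed.
Lemma cmod_eq0 a : cmod a = 0 -> a = 0.
Proof. by move=> h; apply/normr0_eq0; rewrite -cmodE h. Qed.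
Lemma cmod0 : cmod (0 : C) = 0.
Proof. by apply: complexI; rewrite cmodE normr0. Qed.
Lemma cmod_real (r : R) : 0 <= r -> cmod (r%:C : C) = r.
Proof. by move=> h; apply: complexI; rewrite cmodE ger0_norm // ler0c. Qed.
Lemma cmod2 z : ((cmod z)^+2)%:C = z * conjc z.
Proof.
case: z => a b; rewrite /cmod /= sqr_sqrtr ?addr_ge0 ?sqr_ge0 //.
apply/eqP; rewrite eq_complex /=; apply/andP; split; apply/eqP; ring.
Qed.

Lemma cmodRe z : cmod z = complex.Re `|z|.
Proof. by rewrite normc_def. Qed.
Lemma Re_le a b : a <= b -> complex.Re a <= complex.Re b.
Proof. by rewrite lecE => /andP[]. Qed.
Lemma Re_sum n (f : 'I_n -> C) : complex.Re (\sum_i f i) = \sum_i complex.Re (f i).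
Proof.
elim/big_ind2: _ => //; by move=> x1 x2 y1 y2 <- <-; case: x2; case: y2.
Qed.
Lemma cmod_sum n (f : 'I_n -> C) : cmod (\sum_i f i) <= \sum_i cmod (f i).
Proof.
rewrite cmodRe (eq_bigr (fun i => complex.Re `|f i|)); last by move=> i _; rewrite cmodRe.
rewrite -Re_sum; apply: Re_le; exact: ler_norm_sum.
Qed.

Lemma CS n (x y : 'I_n -> R) :
  (\sum_i x i * y i) ^+ 2 <= (\sum_i x i ^+ 2) * (\sum_i y i ^+ 2).
Proof.
have H : 0 <= \sum_i \sum_j (x i * y j - x j * y i) ^+ 2.
  by apply: sumr_ge0 => i _; apply: sumr_ge0 => j _; exact: sqr_ge0.
have E : \sum_i \sum_j (x i * y j - x j * y i) ^+ 2 =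
   \sum_i \sum_j (x i ^+ 2 * y j ^+ 2) + \sum_i \sum_j (y i ^+ 2 * x j ^+ 2)
   - \sum_i \sum_j (2 * ((x i * y i) * (x j * y j))).
  rewrite -big_split -sumrB /=; apply: eq_bigr => i _.
  rewrite -big_split -sumrB /=; apply: eq_bigr => j _; ring.
rewrite E -!big_distrlr /= in H. move: H. 
have F : \sum_i \sum_j 2 * (x i * y i * (x j * y j)) = 2 * (\sum_i x i * y i) ^+ 2.
  by rewrite expr2 big_distrlr mulr_sumr; apply: eq_bigr => i _; rewrite mulr_sumr.
rewrite F (mulrC (\sum_i y i ^+ 2)); lra.

Qed.

Lemma sq_le (p q : R) : 0 <= p -> p <= q -> p ^+ 2 <= q ^+ 2.
Proof. move=> *; nra. Qed.
Lemma sq_le_inv (p q : R) : 0 <= p -> 0 <= q -> p ^+ 2 <= q ^+ 2 -> p <= q.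
Proof. move=> *; nra. Qed.

Lemma sum_mul_le n (x y : 'I_n -> R) :
  \sum_i x i * y i <= Num.sqrt (\sum_i x i ^+ 2) * Num.sqrt (\sum_i y i ^+ 2).
Proof.
rewrite -sqrtrM ?sumr_ge0 // => [|i _]; last exact: sqr_ge0.
apply: le_trans (ler_norm _) _; rewrite -sqrtr_sqr; apply: ler_wsqrtr; exact: CS.
Qed.

Variable n : nat.
Implicit Types (w u : 'cV[C]_n) (X : 'M[C]_n).

Lemma vnorm_ge0 w : 0 <= vnorm w.
Proof. exact: sqrtr_ge0. Qed.
Lemma vnorm2 w : vnorm w ^+ 2 = \sum_i cmod (w i 0) ^+ 2.
Proof. by rewrite sqr_sqrtr // sumr_ge0 // => i _; exact: sqr_ge0. Qed.
Lemma frob_ge0 X : 0 <= frob X.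
Proof. exact: sqrtr_ge0. Qed.
Lemma frob2 X : frob X ^+ 2 = \sum_i \sum_j cmod (X i j) ^+ 2.
Proof.
by rewrite sqr_sqrtr // sumr_ge0 // => i _; apply: sumr_ge0 => j _; exact: sqr_ge0.
Qed.

Lemma vnorm_eq0 w : vnorm w = 0 -> w = 0.
Proof.
move=> h; have: \sum_i cmod (w i 0) ^+ 2 = 0 by rewrite -vnorm2 h expr0n.
move/psumr_eq0P => H; apply/matrixP => i j; rewrite ord1 mxE.
apply: cmod_eq0; apply/eqP; rewrite -sqrf_eq0; apply/eqP.
apply: H => // k _; exact: sqr_ge0.
Qed.

Lemma vnormZ a w : vnorm (a *: w) = cmod a * vnorm w.
Proof.
rewrite /vnorm (eq_bigr (fun i => cmod a ^+ 2 * cmod (w i 0) ^+ 2)); last first.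
  by move=> i _; rewrite mxE cmodM exprMn.
by rewrite -big_distrr sqrtrM ?sqr_ge0 // sqrtr_sqr ger0_norm // cmod_ge0.
Qed.

Lemma vnormN w : vnorm (- w) = vnorm w.
Proof.
rewrite -scaleN1r vnormZ cmodN.
by rewrite (_ : (1 : C) = (1 : R)%:C) // cmod_real // mul1r.
Qed.

Lemma vnormD w u : vnorm (w + u) <= vnorm w + vnorm u.
Proof.
apply: sq_le_inv; rewrite ?addr_ge0 ?vnorm_ge0 //.
have h1 : vnorm (w + u) ^+ 2 <=
    \sum_i (cmod (w i 0) ^+ 2 + cmod (u i 0) ^+ 2 + 2 * (cmod (w i 0) * cmod (u i 0))).
  rewrite vnorm2; apply: ler_sum => i _; rewrite mxE.
  have := cmodD (w i 0) (u i 0); have := cmod_ge0 (w i 0 + u i 0).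
  have := cmod_ge0 (w i 0); have := cmod_ge0 (u i 0); nra.
rewrite !big_split /= in h1. rewrite -mulr_sumr in h1. rewrite -!vnorm2 in h1.
have h2 := @sum_mul_le _ (fun i => cmod (w i 0)) (fun i => cmod (u i 0)).
rewrite -/(vnorm w) -/(vnorm u) /= in h2.
nra.
Qed.

Lemma vnorm_mulmx X w : vnorm (X *m w) <= frob X * vnorm w.
Proof.
apply: sq_le_inv; rewrite ?mulr_ge0 ?vnorm_ge0 ?frob_ge0 //.
rewrite vnorm2 exprMn frob2 vnorm2 big_distrl; apply: ler_sum => i _.
rewrite mxE; apply: le_trans (@CS _ (fun j => cmod (X i j)) (fun j => cmod (w j 0))).
apply: sq_le; first exact: cmod_ge0.
apply: le_trans (@cmod_sum _ _) _; apply: ler_sum => j _; rewrite cmodM //.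
Qed.

Lemma cdotDr v w u : cdot v (w + u) = cdot v w + cdot v u.
Proof. by rewrite /cdot -big_split; apply: eq_bigr => i _; rewrite mxE mulrDr. Qed.
Lemma cdotZr v a w : cdot v (a *: w) = a * cdot v w.
Proof.
by rewrite /cdot mulr_sumr; apply: eq_bigr => i _; rewrite mxE mulrCA.
Qed.
Lemma cdotNr v w : cdot v (- w) = - cdot v w.
Proof. by rewrite -scaleN1r cdotZr mulN1r. Qed.
Lemma cdotBr v w u : cdot v (w - u) = cdot v w - cdot v u.
Proof. by rewrite cdotDr cdotNr. Qed.
Lemma cdotC v w : conjc (cdot v w) = cdot w v.
Proof.
rewrite /cdot rmorph_sum; apply: eq_bigr => i _.
by rewrite rmorphM /= conjcK mulrC.
Qed.
Lemma cdotDl v w u : cdot (w + u) v = cdot w v + cdot u v.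
Proof. by rewrite -cdotC cdotDr rmorphD /= !cdotC. Qed.
Lemma cdotZl v a w : cdot (a *: w) v = conjc a * cdot w v.
Proof. by rewrite -cdotC cdotZr rmorphM /= !cdotC. Qed.
Lemma cdotBl v w u : cdot (w - u) v = cdot w v - cdot u v.
Proof. by rewrite -cdotC cdotBr rmorphB /= !cdotC. Qed.
Lemma cdot_self w : cdot w w = (vnorm w ^+ 2)%:C.
Proof.
rewrite vnorm2 rmorph_sum; apply: eq_bigr => i _.
by rewrite mulrC -cmod2.
Qed.

Lemma ReB a b : complex.Re (a - b) = complex.Re a - complex.Re b.
Proof. by case: a; case: b. Qed.
Lemma Re_ge0 a : 0 <= a -> 0 <= complex.Re a.
Proof. by move/Re_le. Qed.
Lemma vnorm2_Re w : vnorm w ^+ 2 = complex.Re (cdot w w).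
Proof. by rewrite cdot_self. Qed.

Variable v : 'cV[C]_n.
Hypothesis v0 : v != 0.

Lemma cdot_vv_neq0 : cdot v v != 0.
Proof.
rewrite cdot_self; apply/eqP => h.
have h2 : vnorm v ^+ 2 = 0 by case: h.
move: h2 => /eqP; rewrite sqrf_eq0 => /eqP /vnorm_eq0 hv.
by move: v0; rewrite hv eqxx.
Qed.
Lemma cdot_vv_ge0 : 0 <= cdot v v.
Proof. by rewrite cdot_self ler0c sqr_ge0. Qed.

Lemma Pperp_Tv w : cdot v (Pperp v w) = 0.
Proof. by rewrite /Pperp cdotBr cdotZr divfK ?subrr // cdot_vv_neq0. Qed.
Lemma Pperp_id w : cdot v w = 0 -> Pperp v w = w.
Proof. by rewrite /Pperp => ->; rewrite mul0r scale0r subr0. Qed.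
Lemma PperpB w u : Pperp v (w - u) = Pperp v w - Pperp v u.
Proof.
rewrite /Pperp cdotBr; apply/matrixP => i j; rewrite !mxE; ring.
Qed.

Lemma vnorm_Pperp w : vnorm (Pperp v w) <= vnorm w.
Proof.
apply: sq_le_inv; rewrite ?vnorm_ge0 // !vnorm2_Re.
set a := cdot v w; set s := cdot v v.
have key : cdot (Pperp v w) (Pperp v w) = cdot w w - a * conjc a / s.
  rewrite /Pperp cdotBl !cdotBr !cdotZl !cdotZr -/a -/s.
  rewrite -(cdotC v w) -/a.
  have hs := cdot_vv_neq0.
  rewrite -/s in hs.
  have sr : conjc s = s by rewrite /s cdotC.
  rewrite rmorphM /= fmorphV /= sr.
  field; exact: hs.
rewrite key ReB lerBlDr lerDl; apply: Re_ge0.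
apply: mulr_ge0; first exact: mulcJ_ge0.
by rewrite invr_ge0 cdot_vv_ge0.
Qed.

Lemma cdot0r u : cdot u 0 = 0.
Proof. by rewrite -(scale0r (0 : 'cV[C]_n)) cdotZr mul0r. Qed.
Lemma Pperp0 : Pperp v 0 = 0.
Proof. by rewrite /Pperp cdot0r mul0r scale0r subr0. Qed.
Lemma Alv0 A l : Alv A l v 0 = 0.
Proof. by rewrite /Alv mulmx0 Pperp0. Qed.
Lemma vnorm0 : vnorm (0 : 'cV[C]_n) = 0.
Proof. by rewrite -(scale0r (0 : 'cV[C]_n)) vnormZ cmod0 mul0r. Qed.

Definition vH : 'rV[C]_n := \row_j conjc (v j 0).
Definition Qm : 'M[C]_n := (cdot v v)^-1 *: (v *m vH).
Definition Pm : 'M[C]_n := 1%:M - Qm.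
Definition Mx A l : 'M[C]_n := Pm *m (A - l%:M) *m Pm + Qm.

Lemma Qm_mul w : Qm *m w = (cdot v w / cdot v v) *: v.
Proof.
have e : vH *m w = (cdot v w)%:M.
  apply/matrixP => i j; rewrite !ord1 !mxE eqxx mulr1n /cdot.
  by apply: eq_bigr => k _; rewrite mxE.
by rewrite /Qm -scalemxAl -mulmxA e mul_mx_scalar scalerA mulrC.
Qed.
Lemma Pm_mul w : Pm *m w = Pperp v w.
Proof. by rewrite /Pm mulmxBl mul1mx Qm_mul. Qed.
Lemma Mx_mul A l w :
  Mx A l *m w = Alv A l v (Pperp v w) + (cdot v w / cdot v v) *: v.
Proof. by rewrite /Mx mulmxDl Qm_mul -!mulmxA !Pm_mul. Qed.
Lemma cdot_Mx A l w : cdot v (Mx A l *m w) = cdot v w.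
Proof.
rewrite Mx_mul cdotDr /Alv Pperp_Tv add0r cdotZr divfK //; exact: cdot_vv_neq0.
Qed.
Lemma Mx_mulT A l w : cdot v w = 0 -> Mx A l *m w = Alv A l v w.
Proof. by move=> h; rewrite Mx_mul h mul0r scale0r addr0 Pperp_id. Qed.

Lemma inj_unitmx (M : 'M[C]_n) : (forall w, M *m w = 0 -> w = 0) -> M \in unitmx.
Proof.
move=> H; rewrite unitmxE unitfE -det_tr; apply/negP => /det0P [r r0 hr].
have : M *m r^T = 0 by rewrite -[M]trmxK -trmx_mul hr trmx0.
move/H => /(congr1 trmx); rewrite trmxK trmx0 => hr0.
by rewrite hr0 eqxx in r0.
Qed.

Lemma inv_exists A l :
  (forall u, cdot v u = 0 -> Alv A l v u = 0 -> u = 0) ->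
  exists N : 'M[C]_n, is_inv_Alv A l v (mulmx N).
Proof.
move=> Hinj.
have hU : Mx A l \in unitmx.
  apply: inj_unitmx => w hw.
  have cw : cdot v w = 0 by rewrite -(cdot_Mx A l) hw cdot0r.
  by apply: Hinj => //; rewrite -Mx_mulT.
exists (invmx (Mx A l)); split.
- move=> y hy.
  have e : Mx A l *m (invmx (Mx A l) *m y) = y by rewrite mulmxA mulmxV // mul1mx.
  have cw : cdot v (invmx (Mx A l) *m y) = 0 by rewrite -(cdot_Mx A l) e.
  by split => //; rewrite -Mx_mulT.
- move=> w hw; by rewrite -Mx_mulT // mulmxA mulVmx // mul1mx.
Qed.

Lemma inv_inj A l B : is_inv_Alv A l v B ->
  forall u, cdot v u = 0 -> Alv A l v u = 0 -> u = 0.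
Proof.
move=> [h1 h2] u hu e.
rewrite -(h2 u hu) e -{1}(Alv0 A l) h2 //; exact: cdot0r.
Qed.

Lemma inv_uniq A l B1 B2 : is_inv_Alv A l v B1 -> is_inv_Alv A l v B2 ->
  forall y, cdot v y = 0 -> B1 y = B2 y.
Proof.
move=> [h1 _] [_ h2] y hy; have [t e] := h1 y hy.
by rewrite -{2}e h2.
Qed.

Lemma opnorm_eq A l B N : is_inv_Alv A l v B -> is_inv_Alv A l v (mulmx N) ->
  opnorm_Tv v B = opnorm_Tv v (mulmx N).
Proof.
move=> hB hN; rewrite /opnorm_Tv; congr sup.
apply/seteqP; split => x [y hy <-]; exists y => //; rewrite (@inv_uniq A l B (mulmx N) hB hN) //;
  by case: hy.
Qed.

Local Open Scope classical_set_scope.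
Section Opn.
Variable N : 'M[C]_n.
Let E := [set vnorm (N *m y) | y in [set y | Tv v y /\ vnorm y <= 1]].
Let K := opnorm_Tv v (mulmx N).
Lemma E0 : E 0.
Proof. by exists 0; [split; [exact: cdot0r | rewrite vnorm0] | rewrite mulmx0 vnorm0]. Qed.
Lemma E_ub : ubound E (frob N).
Proof.
move=> x [y [_ hy] <-]; apply: le_trans (vnorm_mulmx N y) _.
by rewrite ler_piMr ?frob_ge0.
Qed.
Lemma hasE : has_sup E.
Proof. by split; [exists 0; exact: E0 | exists (frob N); exact: E_ub]. Qed.
Lemma K_ge0 : 0 <= K.
Proof. exact: (sup_upper_bound hasE E0). Qed.
Lemma K_ub y : cdot v y = 0 -> vnorm (N *m y) <= K * vnorm y.
Proof.
move=> hy; have [->|y0] := eqVneq y 0; first by rewrite mulmx0 vnorm0 mulr0.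
have r0 : 0 < vnorm y.
  rewrite lt_neqAle vnorm_ge0 andbT; apply/eqP => h.
  by move: y0; rewrite (@vnorm_eq0 y (esym h)) eqxx.
set r := vnorm y.
have hr : 0 <= r^-1 by rewrite invr_ge0 ltW.
have Ey : E (vnorm (N *m (((r^-1)%:C : C) *: y))).
  exists (((r^-1)%:C : C) *: y) => //; split; first by rewrite /Tv /= cdotZr hy mulr0.
  by rewrite vnormZ cmod_real // mulVf // gt_eqF.
have := sup_upper_bound hasE Ey.
rewrite -scalemxAr vnormZ cmod_real // -/K => h.
have -> : vnorm (N *m y) = r * (r^-1 * vnorm (N *m y)) by rewrite mulrA mulfV ?gt_eqF // mul1r.
by rewrite mulrC ler_wpM2r // ltW.
Qed.
Lemma K_le c : 0 <= c -> (forall y, cdot v y = 0 -> vnorm (N *m y) <= c * vnorm y) ->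
  K <= c.
Proof.
move=> c0 H; apply: ge_sup; first by exists 0; exact: E0.
move=> x [y [hy1 hy2] <-]; apply: le_trans (H y hy1) _.
by rewrite ler_piMr.
Qed.
End Opn.

Lemma zmod_id (V : zmodType) (a b c d : V) : a - c - (b - d) = a - b + (d - c).
Proof. by rewrite opprB !addrA [a - c + d]addrAC [a - b + d]addrAC addrAC. Qed.

Lemma frobN X : frob (- X) = frob X.
Proof.
rewrite /frob; congr Num.sqrt; apply: eq_bigr => i _; apply: eq_bigr => j _.
by rewrite mxE cmodN.
Qed.

Lemma AlvB A l w u : Alv A l v (w - u) = Alv A l v w - Alv A l v u.
Proof. by rewrite /Alv mulmxBr PperpB. Qed.

Lemma diff_bound A l A' l' w :
  vnorm (Alv A l v w - Alv A' l' v w) <= (frob (A' - A) + cmod (l' - l)) * vnorm w.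
Proof.
rewrite /Alv -PperpB; apply: le_trans (vnorm_Pperp _) _.
rewrite !mulmxBl !mul_scalar_mx zmod_id -mulmxBl -scalerBl.
apply: le_trans (vnormD _ _) _; rewrite mulrDl vnormZ lerD2r.
by rewrite -(frobN (A' - A)) opprB vnorm_mulmx.
Qed.

Lemma est A l A' l' N d : is_inv_Alv A l v (mulmx N) ->
  (forall w, vnorm (Alv A l v w - Alv A' l' v w) <= d * vnorm w) ->
  forall w, cdot v w = 0 ->
  vnorm w <= opnorm_Tv v (mulmx N) * vnorm (Alv A' l' v w)
             + opnorm_Tv v (mulmx N) * d * vnorm w.
Proof.
move=> [h1 h2] hd w hw.
set K := opnorm_Tv v (mulmx N); set y := Alv A' l' v w.
have hy : cdot v y = 0 by rewrite /y /Alv Pperp_Tv.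
have [hNy eNy] := h1 y hy.
set z := w - N *m y.
have hz : cdot v z = 0 by rewrite /z cdotBr hw hNy subrr.
have ez : Alv A l v z = Alv A l v w - y by rewrite /z AlvB eNy.
have hAz : cdot v (Alv A l v z) = 0 by rewrite /Alv Pperp_Tv.
have bz : vnorm z <= K * d * vnorm w.
  have := h2 z hz => /= e; rewrite -e.
  apply: le_trans (@K_ub N _ hAz) _; rewrite ez -mulrA ler_wpM2l ?K_ge0 //.
have ew : w = N *m y + z by rewrite /z addrC subrK.
rewrite {1}ew; apply: le_trans (vnormD _ _) _.
by apply: lerD; first exact: K_ub.
Qed.

Lemma frob_eq0 X : frob X = 0 -> X = 0.
Proof.
move=> h; have: \sum_i \sum_j cmod (X i j) ^+ 2 = 0 by rewrite -frob2 h expr0n.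
move/psumr_eq0P => H; apply/matrixP => i j; rewrite mxE.
have Hi : \sum_j cmod (X i j) ^+ 2 = 0.
  apply: H => // k _; apply: sumr_ge0 => m _; exact: sqr_ge0.
move/psumr_eq0P: Hi => Hj.
apply: cmod_eq0; apply/eqP; rewrite -sqrf_eq0; apply/eqP.
apply: Hj => // k _; exact: sqr_ge0.
Qed.

Local Open Scope ereal_scope.
Lemma mu_inv A l N : is_inv_Alv A l v (mulmx N) ->
  mu A l v = (frob A * opnorm_Tv v (mulmx N))%:E.
Proof.
move=> hN; rewrite /mu.
rewrite (_ : [set _ | B in _] = [set (frob A * opnorm_Tv v (mulmx N))%:E]).
  exact: ereal_inf1.
apply/seteqP; split => x.
  by move=> [B hB <-]; rewrite (@opnorm_eq A l B N hB hN).
by move=> ->; exists (mulmx N).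
Qed.

Lemma mu_noinv A l : (forall B, ~ is_inv_Alv A l v B) -> mu A l v = +oo.
Proof.
move=> h; rewrite /mu (_ : [set _ | B in _] = set0) ?ereal_inf0 //.
by apply/seteqP; split => x // [B hB _]; case: (h B).
Qed.
Local Close Scope ereal_scope.

Lemma r1 (x kd e : R) : 0 <= x -> kd <= e -> e < 1 -> x <= kd * x -> x <= 0.
Proof. move=> *; nra. Qed.
Lemma r2 (w y K kd e : R) : 0 <= w -> kd <= e -> e < 1 ->
  w <= K*y + kd*w -> w * (1 - e) <= K * y.
Proof. move=> *; nra. Qed.
Lemma r3 (w y K K' d : R) : 0 <= K' * d -> w <= K*y -> w <= K'*y + K'*d*w ->
  w <= K'*(1+d*K)*y.
Proof. move=> *; nra. Qed.
Lemma r4 (K K' d e : R) : 0 <= K' -> 0 <= K' * (d*K) -> K*d <= e -> e < 1 ->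
  0 <= e -> K <= K'*(1+d*K) -> (1-e)*K <= K'.
Proof. move=> *; nra. Qed.

Lemma B1_lem A' l' N' (K d eps : R) : is_inv_Alv A' l' v (mulmx N') ->
  (forall w, cdot v w = 0 -> vnorm w <= K * vnorm (Alv A' l' v w) + K * d * vnorm w) ->
  0 <= K -> K * d <= eps -> eps < 1 ->
  opnorm_Tv v (mulmx N') <= K / (1 - eps).
Proof.
move=> hN' E1 K0 H eps1.
apply: (K_le N') => [|y hy]; first by rewrite divr_ge0 // subr_ge0 ltW.
have [hw ew] := (proj1 hN') y hy.
have h := E1 _ hw; rewrite ew in h.
rewrite mulrAC ler_pdivlMr ?subr_gt0 //.
exact: (r2 _ _ _ _ _ (vnorm_ge0 _) H eps1 h).
Qed.

Lemma B2_lem A l N (K' d : R) : is_inv_Alv A l v (mulmx N) ->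
  (forall w, cdot v w = 0 -> vnorm w <= K' * vnorm (Alv A l v w) + K' * d * vnorm w) ->
  0 <= K' -> 0 <= d ->
  opnorm_Tv v (mulmx N) <= K' * (1 + d * opnorm_Tv v (mulmx N)).
Proof.
move=> hN E2 K'0 d0.
have K0 := K_ge0 N.
apply: (K_le N) => [|y hy]; first by rewrite mulr_ge0 // addr_ge0 // mulr_ge0.
have [hw ew] := (proj1 hN) y hy.
have h := E2 _ hw; rewrite ew in h.
have h2 := @K_ub N y hy.
have hk : 0 <= K' * d by rewrite mulr_ge0.
exact: (r3 _ _ _ _ _ hk h2 h).
Qed.

Lemma main_sec (A A' : 'M[C]_n) (l l' : C) (eps : R) :
  frob A = 1 -> frob A' = 1 ->
  (mu A l v * (frob (A' - A) + cmod (l' - l))%:E <= eps%:E)%E -> eps < 1 ->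
  (((1 - eps)%:E * mu A l v <= mu A' l' v)%E /\
   (mu A' l' v <= ((1 - eps)^-1)%:E * mu A l v)%E).
Proof.
move=> fA fA' H eps1.
have d0 : 0 <= frob (A' - A) + cmod (l' - l) by rewrite addr_ge0 ?frob_ge0 ?cmod_ge0.
move: H d0; set d := frob (A' - A) + cmod (l' - l) => H d0.
case: (pselect (exists B, is_inv_Alv A l v B)) => [[B hB]|nB]; last first.
  have muA : mu A l v = +oo%E by apply: mu_noinv => B hB; apply: nB; exists B.
  rewrite muA in H *.
  have [dp|] := ltP 0 d.
    by move: H; rewrite (@gt0_mulye _ d%:E) ?lte_fin // leNgt ltey.
  move=> dle; have dz : d = 0 by apply/eqP; rewrite eq_le dle d0.
  have f0 : frob (A' - A) = 0.
    apply/eqP; rewrite eq_le frob_ge0 andbT -dz /d lerDl cmod_ge0 //.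
  have c0 : cmod (l' - l) = 0 by move: dz; rewrite /d f0 add0r.
  have eA : A' = A by apply/eqP; rewrite -subr_eq0; apply/eqP; exact: frob_eq0.
  have el : l' = l by apply/eqP; rewrite -subr_eq0; apply/eqP; exact: cmod_eq0.
  rewrite eA el muA; split; first exact: leey.
  by rewrite gt0_muley // lte_fin invr_gt0 subr_gt0.
have [N hN] := @inv_exists A l (@inv_inj A l B hB).
have K0 := K_ge0 N.
have muA : mu A l v = (opnorm_Tv v (mulmx N))%:E by rewrite (@mu_inv A l N hN) fA mul1r.
rewrite muA -EFinM lee_fin in H.
have hd : forall w, vnorm (Alv A l v w - Alv A' l' v w) <= d * vnorm w.
  by move=> w; exact: diff_bound.
have E1 := @est A l A' l' N d hN hd.
have inj' : forall u, cdot v u = 0 -> Alv A' l' v u = 0 -> u = 0.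
  move=> u hu e; have h := E1 u hu; rewrite e vnorm0 mulr0 add0r in h.
  apply: vnorm_eq0; apply/eqP; rewrite eq_le vnorm_ge0 andbT.
  exact: (r1 _ _ _ (vnorm_ge0 u) H eps1 h).
have [N' hN'] := @inv_exists A' l' inj'.
have K'0 := K_ge0 N'.
have muA' := @mu_inv A' l' N' hN'; rewrite fA' mul1r in muA'.
have hd' : forall w, vnorm (Alv A' l' v w - Alv A l v w) <= d * vnorm w.
  move=> w; apply: le_trans (diff_bound _ _ _ _ _) _.
  by rewrite -(frobN (A - A')) opprB -(cmodN (l - l')) opprB.
have E2 := @est A' l' A l N' d hN' hd'.
have B1 := @B1_lem A' l' N' _ d eps hN' E1 K0 H eps1.
have B2 := @B2_lem A l N _ d hN E2 K'0 d0.
rewrite muA muA' -!EFinM !lee_fin; split; last by rewrite (mulrC _^-1).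
have e0 : 0 <= eps := le_trans (mulr_ge0 K0 d0) H.
have hk := mulr_ge0 K'0 (mulr_ge0 d0 K0).
exact: (r4 _ _ _ _ K'0 hk H eps1 e0 B2).
Qed.
End S.
Local Close Scope complex_scope.

Theorem lemma4p3 (R : realType) (n : nat) (A A' : 'M[R[i]]_n) (l l' : R[i])
    (v : 'cV[R[i]]_n) (eps : R) :
  frob A = 1 -> frob A' = 1 -> v != 0 ->
  (mu A l v * (frob (A' - A) + cmod (l' - l))%:E <= eps%:E)%E -> eps < 1 ->
  (((1 - eps)%:E * mu A l v <= mu A' l' v)%E /\
   (mu A' l' v <= ((1 - eps)^-1)%:E * mu A l v)%E).
Proof. by move=> fA fA' v0; exact: main_sec. Qed.
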